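(* Let $n\geq 0$ be an integer, $r,s\in\mathbf{N}$ and $k\in\mathbf{Z}$. Then \[\tilde{A}_{n}^{(r,k)}(x)=\sum_{m=0}^{n}\left\{\sum_{l=0}^{n-m}\binom{n}{l}S_{1}(n-l,m)\tilde{A}_{l}^{(r+s,k)}(s)\right\}B_{m}^{(s)}(x).\]
   Context: For $k\in\mathbf{Z}$, $Lif_{k}(x)=\sum_{m=0}^{\infty}\frac{x^{m}}{m!(m+1)^{k}}$. For integers $r\geq 0$, $k\in\mathbf{Z}$, the polynomials $\tilde{A}_{n}^{(r,k)}(x)$ are defined by \[\left(\frac{t}{(1+t)\log(1+t)}\right)^{r}Lif_{k}\left(-\log(1+t)\right)(1+t)^{x}=\sum_{n=0}^{\infty}\tilde{A}_{n}^{(r,k)}(x)\frac{t^{n}}{n!}.\] The Bernoulli polynomials of order $s$ are defined by $\left(\frac{t}{e^{t}-1}\right)^{s}e^{xt}=\sum_{n=0}^{\infty}B_{n}^{(s)}(x)\frac{t^{n}}{n!}$. $S_{1}(n,m)$ denotes the signed Stirling numbers of the first kind, defined by $x(x-1)\cdots(x-n+1)=\sum_{m=0}^{n}S_{1}(n,m)x^{m}$. *)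

(* Defs.v *)
(* Formal power series are represented by coefficient
   functions nat -> R over a numFieldType R (characteristic 0). *)
From mathcomp Require Import all_boot all_order all_algebra.
Set Implicit Arguments. Unset Strict Implicit. Unset Printing Implicit Defensive.
Import Order.TTheory GRing.Theory Num.Theory.
Local Open Scope ring_scope.

Section FPS.
Variable R : numFieldType.

Definition fps := nat -> R.

Definition fps_one : fps := fun j => if j == 0%N then 1 else 0.
Definition fps_X : fps := fun j => if j == 1%N then 1 else 0.
Definition fps_add (f g : fps) : fps := fun j => f j + g j.
Definition fps_opp (f : fps) : fps := fun j => - f j.
Definition fps_scale (c : R) (f : fps) : fps := fun j => c * f j.
Definition fps_mul (f g : fps) : fps :=
  fun n => \sum_(i < n.+1) f i * g (n - i)%N.
Definition fps_pow (f : fps) (r : nat) : fps := iter r (fps_mul f) fps_one.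
(* f / t  (for f with zero constant term) *)
Definition fps_divX (f : fps) : fps := fun j => f j.+1.
Fixpoint fps_inv_list (a : fps) (n : nat) : seq R :=
  if n is n'.+1 then
    let l := fps_inv_list a n' in
    rcons l (- (a 0%N)^-1 * \sum_(i < n) a (n - i)%N * nth 0 l i)
  else [:: (a 0%N)^-1].
Definition fps_inv (a : fps) : fps := fun n => nth 0 (fps_inv_list a n) n.
(* composition c(g) = sum_m c_m g^m, for g with zero constant term *)
Definition fps_comp (c g : fps) : fps :=
  fun n => \sum_(m < n.+1) c m * fps_pow g m n.

Definition fps_exp : fps := fun j => (j`!%:R)^-1.
Definition fps_log1p : fps :=
  fun j => if j is j'.+1 then (-1) ^+ j' / j%:R else 0.
Definition fps_Lif (k : int) : fps :=
  fun m => (m`!%:R * ((m.+1)%:R ^ k))^-1.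

Definition fps_A_factor : fps :=
  fps_inv (fps_mul (fps_add fps_one fps_X) (fps_divX fps_log1p)).
(* (1+t)^x = exp(x log(1+t)) *)
Definition fps_onept_pow (x : R) : fps :=
  fps_comp fps_exp (fps_scale x fps_log1p).

Definition Atil_gf (r : nat) (k : int) (x : R) : fps :=
  fps_mul (fps_mul (fps_pow fps_A_factor r)
                   (fps_comp (fps_Lif k) (fps_opp fps_log1p)))
          (fps_onept_pow x).
Definition Atil (n r : nat) (k : int) (x : R) : R := n`!%:R * Atil_gf r k x n.

Definition bern_gf (s : nat) (x : R) : fps :=
  fps_mul (fps_pow (fps_inv (fps_divX (fps_add fps_exp (fps_opp fps_one)))) s)
          (fps_comp fps_exp (fps_scale x fps_X)).
Definition bernoulli_poly (s n : nat) (x : R) : R := n`!%:R * bern_gf s x n.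

End FPS.

Definition stirling1 (n m : nat) : int :=
  (\prod_(i < n) ('X - (i%:R)%:P) : {poly int})`_m.

(* Main.v *)
Require Import Defs.
From mathcomp Require Import all_boot all_order all_algebra zify ring.
From Stdlib Require Import FunctionalExtensionality.
Unset Implicit Arguments. Unset Strict Implicit. Unset Printing Implicit Defensive.
Import Order.TTheory GRing.Theory Num.Theory.
Local Open Scope ring_scope.

Section Fps.
Variable R : numFieldType.
Implicit Types (f g h c d a b : fps R) (p q : {poly R}).

Definition pc p : fps R := fun i => p`_i.
Definition agree (n : nat) f g := forall i, (i <= n)%N -> f i = g i.
Definition trunc n f : {poly R} := \poly_(i < n.+1) f i.

Lemma agree_trunc n f : agree n f (pc (trunc n f)).
Proof. by move=> i hi; rewrite /pc coef_poly ltnS hi. Qed.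

Lemma fps_ext f g : (forall n, agree n f g) -> f = g.
Proof. move=> H; apply: functional_extensionality => i; exact: (H i i (leqnn i)). Qed.

Lemma agree_le {m n f g} : (m <= n)%N -> agree n f g -> agree m f g.
Proof. by move=> hmn H i hi; apply: H; lia. Qed.

Lemma agree_sym {n f g} : agree n f g -> agree n g f.
Proof. by move=> H i hi; rewrite H. Qed.

Lemma agree_trans {n f g h} : agree n f g -> agree n g h -> agree n f h.
Proof. by move=> H1 H2 i hi; rewrite H1 ?H2. Qed.

Lemma agree_refl n f : agree n f f. Proof. by []. Qed.

Lemma agree_eq n f g : f = g -> agree n f g. Proof. by move->. Qed.

Lemma pc_mul p q : fps_mul (pc p) (pc q) = pc (p * q).
Proof. by apply: functional_extensionality => n; rewrite /fps_mul /pc coefM. Qed.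

Lemma pc_add p q : fps_add (pc p) (pc q) = pc (p + q).
Proof. by apply: functional_extensionality => n; rewrite /fps_add /pc coefD. Qed.

Lemma pc_opp p : fps_opp (pc p) = pc (- p).
Proof. by apply: functional_extensionality => n; rewrite /fps_opp /pc coefN. Qed.

Lemma pc_scale (a : R) p : fps_scale a (pc p) = pc (a *: p).
Proof. by apply: functional_extensionality => n; rewrite /fps_scale /pc coefZ. Qed.

Lemma pc_one : fps_one R = pc 1.
Proof. by apply: functional_extensionality => n; rewrite /fps_one /pc coef1; case: n. Qed.

Lemma pc_X : fps_X R = pc 'X.
Proof. by apply: functional_extensionality => n; rewrite /fps_X /pc coefX; case: (n == 1)%N. Qed.

Lemma pc_pow p m : fps_pow (pc p) m = pc (p ^+ m).
Proof.
elim: m => [|m IH]; first by rewrite expr0 -pc_one.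
by rewrite /fps_pow iterS -/(fps_pow _ _) IH pc_mul exprS.
Qed.

Lemma mul_agree {n f f' g g'} :
  agree n f f' -> agree n g g' -> agree n (fps_mul f g) (fps_mul f' g').
Proof.
move=> Hf Hg i hi; rewrite /fps_mul; apply: eq_bigr => j _.
have := ltn_ord j; move=> hj.
by rewrite Hf ?Hg //; lia.
Qed.

Lemma add_agree {n f f' g g'} :
  agree n f f' -> agree n g g' -> agree n (fps_add f g) (fps_add f' g').
Proof. by move=> Hf Hg i hi; rewrite /fps_add Hf ?Hg. Qed.

Lemma opp_agree {n f f'} : agree n f f' -> agree n (fps_opp f) (fps_opp f').
Proof. by move=> Hf i hi; rewrite /fps_opp Hf. Qed.

Lemma scale_agree {n} (a : R) {f f'} : agree n f f' -> agree n (fps_scale a f) (fps_scale a f').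
Proof. by move=> Hf i hi; rewrite /fps_scale Hf. Qed.

Lemma pow_agree {n} m {f f'} : agree n f f' -> agree n (fps_pow f m) (fps_pow f' m).
Proof.
move=> Hf; elim: m => [|m IH] //.
by rewrite /fps_pow !iterS; apply: mul_agree.
Qed.

Lemma comp_agree {n c c' g g'} :
  agree n c c' -> agree n g g' -> agree n (fps_comp c g) (fps_comp c' g').
Proof.
move=> Hc Hg i hi; rewrite /fps_comp; apply: eq_bigr => j _.
have := ltn_ord j; move=> hj.
by rewrite Hc ?(pow_agree j Hg) //; lia.
Qed.

Definition fps_deriv f : fps R := fun j => (j.+1)%:R * f j.+1.

Lemma pc_deriv p : fps_deriv (pc p) = pc p^`().
Proof. by apply: functional_extensionality => n; rewrite /fps_deriv /pc coef_deriv mulr_natl. Qed.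

Lemma deriv_agree {n f g} : agree n.+1 f g -> agree n (fps_deriv f) (fps_deriv g).
Proof. by move=> H i hi; rewrite /fps_deriv H. Qed.

Lemma sum_ext0 (F : nat -> R) (a N : nat) : (a <= N)%N -> (forall j, (a <= j)%N -> F j = 0) ->
  \sum_(j < N) F j = \sum_(j < a) F j.
Proof.
move=> aN H; rewrite -(subnKC aN) big_split_ord /=.
rewrite [X in _ + X]big1 ?addr0 // => j _.
by apply: H; rewrite leq_addr.
Qed.

Lemma coef_pow_low q m n : q`_0 = 0 -> (n < m)%N -> (q ^+ m)`_n = 0.
Proof.
move=> q0 hnm.
have -> : q = (\poly_(i < size q) q`_i.+1) * 'X.
  apply/polyP => i; rewrite coefMX coef_poly; case: i => [|i] //=.
  by case: ltnP => // h; rewrite nth_default //; lia.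
by rewrite exprMn coefMXn hnm.
Qed.

Lemma pc_comp p q : q`_0 = 0 -> fps_comp (pc p) (pc q) = pc (p \Po q).
Proof.
move=> q0; apply: functional_extensionality => n.
rewrite /fps_comp /pc coef_comp_poly.
under eq_bigr do rewrite pc_pow.
rewrite /pc.
rewrite -(@sum_ext0 (fun j => p`_j * (q ^+ j)`_n) n.+1 (maxn (size p) n.+1)) ?leq_maxr //; last first.
  by move=> j hj; rewrite coef_pow_low ?mulr0.
rewrite (@sum_ext0 (fun j => p`_j * (q ^+ j)`_n) (size p) (maxn (size p) n.+1)) ?leq_maxl //.
by move=> j hj; rewrite nth_default ?mul0r.
Qed.

Lemma trunc0 n {g} : g 0%N = 0 -> (trunc n g)`_0 = 0.
Proof. by move=> g0; rewrite coef_poly. Qed.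

Ltac trA n := apply: agree_trans; [apply: (mul_agree (agree_trunc n _) (agree_trunc n _))|].

Lemma fps_mulC f g : fps_mul f g = fps_mul g f.
Proof.
apply: fps_ext => n.
apply: agree_trans (mul_agree (agree_trunc n f) (agree_trunc n g)) _.
rewrite pc_mul mulrC -pc_mul.
by apply: mul_agree; apply: agree_sym; apply: agree_trunc.
Qed.

Lemma fps_mulA f g h : fps_mul f (fps_mul g h) = fps_mul (fps_mul f g) h.
Proof.
apply: fps_ext => n.
apply: agree_trans (mul_agree (agree_trunc n f) (mul_agree (agree_trunc n g) (agree_trunc n h))) _.
rewrite !pc_mul mulrA -!pc_mul.
by apply: mul_agree; [apply: mul_agree|]; apply: agree_sym; apply: agree_trunc.
Qed.

Lemma fps_mulCA f g h : fps_mul f (fps_mul g h) = fps_mul g (fps_mul f h).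
Proof. by rewrite fps_mulA (fps_mulC f g) -fps_mulA. Qed.

Lemma fps_mul1 f : fps_mul (fps_one R) f = f.
Proof.
apply: fps_ext => n.
apply: agree_trans (mul_agree (agree_refl n _) (agree_trunc n f)) _.
by rewrite pc_one pc_mul mul1r; apply: agree_sym; apply: agree_trunc.
Qed.

Lemma fps_mulr1 f : fps_mul f (fps_one R) = f.
Proof. by rewrite fps_mulC fps_mul1. Qed.

Lemma fps_pow_add f (a b : nat) : fps_pow f (a + b) = fps_mul (fps_pow f a) (fps_pow f b).
Proof.
elim: a => [|a IH]; first by rewrite add0n fps_mul1.
by rewrite addSn /fps_pow !iterS -!/(fps_pow _ _) IH fps_mulA.
Qed.

Lemma fps_pow_mul f g (a : nat) : fps_pow (fps_mul f g) a = fps_mul (fps_pow f a) (fps_pow g a).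
Proof.
elim: a => [|a IH]; first by rewrite fps_mul1.
rewrite /fps_pow !iterS -!/(fps_pow _ _) IH.
by rewrite -!fps_mulA (fps_mulCA g).
Qed.

Lemma fps_pow_one (a : nat) : fps_pow (fps_one R) a = fps_one R.
Proof. by elim: a => [|a IH] //; rewrite /fps_pow iterS -/(fps_pow _ _) IH fps_mul1. Qed.

Lemma fps_comp_mul c d g : g 0%N = 0 ->
  fps_comp (fps_mul c d) g = fps_mul (fps_comp c g) (fps_comp d g).
Proof.
move=> g0; apply: fps_ext => n.
have q0 := trunc0 n g0.
apply: agree_trans (comp_agree (mul_agree (agree_trunc n c) (agree_trunc n d)) (agree_trunc n g)) _.
rewrite pc_mul pc_comp // comp_polyM -pc_mul -!pc_comp //.
by apply: mul_agree; apply: comp_agree; apply: agree_sym; apply: agree_trunc.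
Qed.

Lemma fps_comp_add c d g :
  fps_comp (fps_add c d) g = fps_add (fps_comp c g) (fps_comp d g).
Proof.
apply: functional_extensionality => n; rewrite /fps_comp /fps_add -big_split /=.
by apply: eq_bigr => i _; rewrite mulrDl.
Qed.

Lemma fps_comp_opp c g : fps_comp (fps_opp c) g = fps_opp (fps_comp c g).
Proof.
apply: functional_extensionality => n; rewrite /fps_comp /fps_opp -sumrN /=.
by apply: eq_bigr => i _; rewrite mulNr.
Qed.

Lemma fps_comp_one g : fps_comp (fps_one R) g = fps_one R.
Proof.
apply: functional_extensionality => n; rewrite /fps_comp big_ord_recl /= big1 ?addr0.
  by rewrite /fps_one /= mul1r.
by move=> i _; rewrite /fps_one /= mul0r.
Qed.

Lemma fps_comp_pow c g m : g 0%N = 0 ->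
  fps_comp (fps_pow c m) g = fps_pow (fps_comp c g) m.
Proof.
move=> g0; elim: m => [|m IH]; first by rewrite fps_comp_one.
by rewrite /fps_pow !iterS -!/(fps_pow _ _) fps_comp_mul // IH.
Qed.

Lemma fps_chain c g : g 0%N = 0 ->
  fps_deriv (fps_comp c g) = fps_mul (fps_comp (fps_deriv c) g) (fps_deriv g).
Proof.
move=> g0; apply: fps_ext => n.
have q0 := trunc0 n.+1 g0.
apply: agree_trans (deriv_agree (comp_agree (agree_trunc n.+1 c) (agree_trunc n.+1 g))) _.
rewrite pc_comp // pc_deriv deriv_comp -pc_mul -pc_comp // -!pc_deriv.
apply: mul_agree; last by apply: deriv_agree; apply: agree_sym; apply: agree_trunc.
apply: comp_agree; first by apply: deriv_agree; apply: agree_sym; apply: agree_trunc.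
by apply: agree_le (leqnSn n) _; apply: agree_sym; apply: agree_trunc.
Qed.

Lemma fps_mulX f : fps_mul (fps_X R) f = fun n => if n is n'.+1 then f n' else 0.
Proof.
apply: functional_extensionality => n; rewrite /fps_mul.
case: n => [|n]; first by rewrite big_ord1 /fps_X /= mul0r.
rewrite big_ord_recl big_ord_recl /= big1 ?addr0.
  by rewrite /fps_X /= mul0r mul1r add0r subn1.
by move=> i _; rewrite /fps_X /= mul0r.
Qed.

Lemma fps_mulX_divX f : f 0%N = 0 -> fps_mul (fps_X R) (fps_divX f) = f.
Proof. by move=> f0; rewrite fps_mulX; apply: functional_extensionality => -[|n]. Qed.

Lemma fps_mulX_inj f g : fps_mul (fps_X R) f = fps_mul (fps_X R) g -> f = g.
Proof.
rewrite !fps_mulX => H; apply: functional_extensionality => n.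
by have := congr1 (fun F => F n.+1) H.
Qed.

Lemma fps_mulDl f g h : fps_mul (fps_add f g) h = fps_add (fps_mul f h) (fps_mul g h).
Proof.
apply: functional_extensionality => n; rewrite /fps_mul /fps_add -big_split /=.
by apply: eq_bigr => i _; rewrite mulrDl.
Qed.

Lemma fps_mul_addX f : fps_mul (fps_add (fps_one R) (fps_X R)) f =
  fun n => f n + (if n is n'.+1 then f n' else 0).
Proof. by rewrite fps_mulDl fps_mul1 fps_mulX. Qed.

Lemma size_inv_list a n : size (fps_inv_list a n) = n.+1.
Proof. by elim: n => [|n IH] //=; rewrite size_rcons IH. Qed.

Lemma inv_list_prefix a n i : (i <= n)%N -> nth 0 (fps_inv_list a n) i = fps_inv a i.
Proof.
elim: n => [|n IH] hi.
  by move: hi; rewrite leqn0 => /eqP ->.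
case: (ltnP i n.+1) => h.
  by rewrite /= nth_rcons size_inv_list h IH.
have -> : i = n.+1 by apply/eqP; rewrite eqn_leq hi h.
by [].
Qed.

Lemma fps_invS a n : fps_inv a n.+1 =
  - (a 0%N)^-1 * \sum_(i < n.+1) a (n.+1 - i)%N * fps_inv a i.
Proof.
rewrite {1}/fps_inv /= nth_rcons size_inv_list ltnn eqxx.
congr (_ * _); apply: eq_bigr => i _; rewrite inv_list_prefix //.
by rewrite -ltnS.
Qed.

Lemma fps_mul_inv a : a 0%N != 0 -> fps_mul a (fps_inv a) = fps_one R.
Proof.
move=> a0; apply: functional_extensionality => n.
case: n => [|n].
  by rewrite /fps_mul big_ord1 /fps_inv /= mulfV.
rewrite fps_mulC /fps_mul big_ord_recr /= subnn fps_invS.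
rewrite mulrAC mulNr mulVf // mulN1r /fps_one /=.
rewrite (eq_bigr (fun i : 'I_n.+1 => a (n.+1 - i)%N * fps_inv a i)) ?subrr // => i _.
exact: mulrC.
Qed.

Lemma fps_inv_uniq a b : a 0%N != 0 -> fps_mul a b = fps_one R -> fps_inv a = b.
Proof.
move=> a0 H.
by rewrite -[fps_inv a]fps_mul1 -H -fps_mulA (fps_mulC b) fps_mulA fps_mul_inv // fps_mul1.
Qed.

Notation E := (fps_exp R).
Notation L := (fps_log1p R).
Notation Z := (fps_add (fps_one R) (fps_X R)).

Lemma L0 : L 0%N = 0. Proof. by []. Qed.

Lemma natS_neq0 n : (n.+1)%:R != 0 :> R.
Proof. by rewrite pnatr_eq0. Qed.

Lemma fact_neq0 n : (n`!)%:R != 0 :> R.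
Proof. by rewrite pnatr_eq0 -lt0n fact_gt0. Qed.

Lemma deriv_exp : fps_deriv E = E.
Proof.
apply: functional_extensionality => j; rewrite /fps_deriv /fps_exp factS natrM invfM.
by rewrite mulrA mulfV ?mul1r // natS_neq0.
Qed.

Lemma derivL : fps_deriv L = fun j => (-1) ^+ j.
Proof.
apply: functional_extensionality => j; rewrite /fps_deriv /fps_log1p.
by rewrite mulrC -mulrA mulVf ?mulr1 // natS_neq0.
Qed.

Lemma Z_derivL : fps_mul Z (fps_deriv L) = fps_one R.
Proof.
rewrite fps_mul_addX derivL; apply: functional_extensionality => -[|n].
  by rewrite /fps_one /= addr0.
by rewrite /fps_one /= exprS mulN1r addNr.
Qed.

Lemma comp_X g : g 0%N = 0 -> fps_comp (fps_X R) g = g.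
Proof.
move=> g0; apply: functional_extensionality => -[|n].
  by rewrite /fps_comp big_ord1 /fps_X /= mul0r.
rewrite /fps_comp big_ord_recl big_ord_recl /= big1 ?addr0.
  rewrite /fps_X /= mul0r mul1r add0r.
  by rewrite /fps_pow /= fps_mulr1.
by move=> i _; rewrite /fps_X /= mul0r.
Qed.

Lemma key_expL : fps_comp E L = Z.
Proof.
set y := fps_comp E L.
have Hd : fps_deriv y = fps_mul y (fps_deriv L).
  by rewrite /y fps_chain // deriv_exp.
have H : fps_mul Z (fps_deriv y) = y.
  by rewrite Hd fps_mulCA Z_derivL fps_mulr1.
have Hn n : fps_deriv y n + (if n is n'.+1 then fps_deriv y n' else 0) = y n.
  by have := congr1 (fun F => F n) H; rewrite fps_mul_addX.
have y0 : y 0%N = 1.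
  by rewrite /y /fps_comp big_ord1 /fps_exp /= invr1 mul1r.
have y1 : y 1%N = 1.
  by have := Hn 0%N; rewrite addr0 y0 /fps_deriv mul1r.
have y2 n : y n.+2 = 0.
  elim: n => [|n IH].
    have := Hn 1%N; rewrite /fps_deriv y1 mul1r -[RHS]add0r => /addIr /eqP.
    by rewrite mulf_eq0 (negbTE (natS_neq0 _)) /= => /eqP.
  have := Hn n.+2; rewrite /fps_deriv IH mulr0 addr0 => /eqP.
  by rewrite mulf_eq0 (negbTE (natS_neq0 _)) /= => /eqP.
apply: functional_extensionality => -[|[|n]].
- by rewrite y0 /fps_add /fps_one /fps_X /= addr0.
- by rewrite y1 /fps_add /fps_one /fps_X /= add0r.
- by rewrite y2 /fps_add /fps_one /fps_X /= addr0.
Qed.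

Definition expx (x : R) : fps R := fun j => x ^+ j * E j.

Lemma fps_mul_scalel (a : R) f g : fps_mul (fps_scale a f) g = fps_scale a (fps_mul f g).
Proof.
apply: functional_extensionality => n; rewrite /fps_mul /fps_scale mulr_sumr.
by apply: eq_bigr => i _; rewrite mulrA.
Qed.

Lemma fps_mul_scaler (a : R) f g : fps_mul f (fps_scale a g) = fps_scale a (fps_mul f g).
Proof. by rewrite fps_mulC fps_mul_scalel fps_mulC. Qed.

Lemma pow_scale (a : R) g m : fps_pow (fps_scale a g) m = fps_scale (a ^+ m) (fps_pow g m).
Proof.
elim: m => [|m IH].
  by apply: functional_extensionality => n; rewrite /fps_scale expr0 mul1r.
rewrite /fps_pow !iterS -!/(fps_pow _ _) IH fps_mul_scalel fps_mul_scaler.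
by apply: functional_extensionality => n; rewrite /fps_scale mulrA exprS.
Qed.

Lemma comp_expx (x : R) c g :
  fps_comp (fun j => x ^+ j * c j) g = fps_comp c (fps_scale x g).
Proof.
apply: functional_extensionality => n; rewrite /fps_comp.
apply: eq_bigr => m _; rewrite pow_scale /fps_scale.
by rewrite mulrCA mulrA.
Qed.

Lemma comp_scaleX (x : R) c : fps_comp c (fps_scale x (fps_X R)) = fun j => x ^+ j * c j.
Proof.
apply: functional_extensionality => n; rewrite /fps_comp.
rewrite big_ord_recr /= big1 ?add0r.
  by rewrite pow_scale pc_X pc_pow /fps_scale /pc coefXn eqxx mulr1 mulrC.
move=> i _; rewrite pow_scale pc_X pc_pow /fps_scale /pc coefXn.
by rewrite eqn_leq leqNgt ltn_ord /= mulr0 mulr0.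
Qed.

Lemma binom_frac n i : (i <= n)%N ->
  ('C(n, i))%:R / (n`!)%:R = ((i`!)%:R)^-1 * (((n - i)`!)%:R)^-1 :> R.
Proof.
move=> hi; rewrite -(bin_fact hi) !natrM !invfM mulVKf //.
by rewrite pnatr_eq0 -lt0n bin_gt0.
Qed.

Lemma expx_add (x y : R) : fps_mul (expx x) (expx y) = expx (x + y).
Proof.
apply: functional_extensionality => n; rewrite /fps_mul /expx /fps_exp.
rewrite addrC exprDn mulr_suml; apply: eq_bigr => i _.
have hi : (i <= n)%N by rewrite -ltnS.
rewrite -[_ *+ 'C(n, i)]mulr_natr -[RHS]mulrA binom_frac //; ring.
Qed.

Definition P (x : R) := fps_comp (expx x) L.

Lemma onept_P x : fps_onept_pow x = P x.
Proof. by rewrite /fps_onept_pow /P /expx comp_expx. Qed.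

Lemma P_add x y : P (x + y) = fps_mul (P x) (P y).
Proof. by rewrite /P -expx_add fps_comp_mul. Qed.

Lemma P1 : P 1 = Z.
Proof.
rewrite /P -key_expL; congr fps_comp; apply: functional_extensionality => j.
by rewrite /expx expr1n mul1r.
Qed.

Lemma P_nat s : P (s%:R) = fps_pow Z s.
Proof.
elim: s => [|s IH].
  rewrite /P (_ : expx 0%:R = fps_one R) ?fps_comp_one //; apply: functional_extensionality => -[|j].
    by rewrite /expx /fps_exp /fps_one /= invr1 mulr1.
  by rewrite /expx /fps_one /= expr0n mul0r.
by rewrite -natr1 addrC P_add P1 IH.
Qed.

Notation D := (fps_divX (fps_add E (fps_opp (fps_one R)))).

Lemma comp_divX f g : f 0%N = 0 -> g 0%N = 0 ->
  fps_mul g (fps_comp (fps_divX f) g) = fps_comp f g.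
Proof.
move=> f0 g0.
by rewrite -{2}(fps_mulX_divX f f0) fps_comp_mul // comp_X.
Qed.

Lemma comp_D : fps_mul (fps_divX L) (fps_comp D L) = fps_one R.
Proof.
apply: fps_mulX_inj; rewrite fps_mulA fps_mulX_divX // comp_divX //; last first.
  by rewrite /fps_add /fps_opp /fps_exp /fps_one /= invr1 subrr.
rewrite fps_comp_add fps_comp_opp fps_comp_one key_expL fps_mulr1.
by apply: functional_extensionality => j; rewrite /fps_add /fps_opp addrAC subrr add0r.
Qed.

Lemma comp_D0 : fps_comp D L 0%N != 0.
Proof.
rewrite /fps_comp big_ord1 /fps_divX /fps_add /fps_opp /fps_exp /fps_one /=.
by rewrite subr0 invr1 mulr1 oner_neq0.
Qed.

Lemma D0 : D 0%N != 0.
Proof. by rewrite /fps_divX /fps_add /fps_opp /fps_exp /fps_one /= subr0 invr1 oner_neq0. Qed.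

Lemma comp_invD : fps_comp (fps_inv D) L = fps_divX L.
Proof.
have h1 : fps_mul (fps_comp D L) (fps_comp (fps_inv D) L) = fps_one R.
  by rewrite -fps_comp_mul // fps_mul_inv ?D0 // fps_comp_one.
have h2 : fps_mul (fps_comp D L) (fps_divX L) = fps_one R.
  by rewrite fps_mulC comp_D.
by rewrite -(fps_inv_uniq _ _ comp_D0 h1) (fps_inv_uniq _ _ comp_D0 h2).
Qed.

Lemma comp_bern s x : fps_comp (bern_gf s x) L = fps_mul (fps_pow (fps_divX L) s) (P x).
Proof.
rewrite /bern_gf fps_comp_mul // fps_comp_pow // comp_invD comp_scaleX.
by [].
Qed.

Notation F := (fps_A_factor R).
Notation M := (fps_mul Z (fps_divX L)).

Lemma M0 : M 0%N != 0.
Proof.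
by rewrite /fps_mul big_ord1 /fps_add /fps_one /fps_X /fps_divX /fps_log1p /= addr0 mul1r divr1 oner_neq0.
Qed.

Lemma FM : fps_mul F M = fps_one R.
Proof. by rewrite fps_mulC fps_mul_inv // M0. Qed.

Lemma rearr a b c d e f :
  fps_mul (fps_mul (fps_mul (fps_mul a b) c) d) (fps_mul e f) =
  fps_mul (fps_mul (fps_mul a c) f) (fps_mul b (fps_mul d e)).
Proof.
rewrite -!fps_mulA; congr (fps_mul a _).
rewrite (fps_mulCA b c); congr (fps_mul c _).
rewrite [RHS]fps_mulCA; congr (fps_mul b _).
rewrite [RHS]fps_mulCA; congr (fps_mul d _).
exact: fps_mulC.
Qed.

Lemma main_gf r s k x :
  Atil_gf r k x = fps_mul (Atil_gf (r + s) k (s%:R)) (fps_comp (bern_gf s x) L).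
Proof.
rewrite comp_bern /Atil_gf !onept_P P_nat fps_pow_add rearr.
rewrite -fps_pow_mul -fps_pow_mul.
have -> : fps_mul F (fps_mul Z (fps_divX L)) = fps_one R by exact: FM.
by rewrite fps_pow_one fps_mulr1.
Qed.

Notation SP j := (\prod_(i < j) ('X - (i%:R)%:P) : {poly R}).

Lemma stirP j : map_poly (intr : int -> R) (\prod_(i < j) ('X - (i%:R)%:P)) = SP j.
Proof.
elim: j => [|j IH]; first by rewrite !big_ord0 rmorph1.
rewrite !big_ord_recr /= rmorphM /= IH; congr (_ * _).
by rewrite rmorphB /= map_polyX map_polyC /= rmorph_nat.
Qed.

Lemma stirR j m : (stirling1 j m)%:~R = (SP j)`_m.
Proof. by rewrite /stirling1 -stirP coef_map. Qed.

Lemma sizeSP j : size (SP j) = j.+1.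
Proof. by rewrite size_prod_XsubC [index_enum _]unlock -enumT size_enum_ord. Qed.

Lemma powL_low m j : (j < m)%N -> fps_pow L m j = 0.
Proof.
move=> hjm; rewrite (pow_agree m (agree_trunc j L) j (leqnn j)) pc_pow /pc.
by rewrite coef_pow_low // trunc0.
Qed.

Lemma SP_eval j N : (j <= N)%N -> (SP j).[N%:R] = (N ^_ j)%:R.
Proof.
move=> hjN; rewrite horner_prod ffact_prod natr_prod; apply: eq_bigr => i _.
by rewrite hornerXsubC natrB //; have := ltn_ord i; lia.
Qed.

Lemma powZ N j : fps_pow Z N j = ('C(N, j))%:R.
Proof.
elim: N j => [|N IH] j.
  by case: j => [|j] //; rewrite /fps_pow /= /fps_one /= bin0n.
rewrite /fps_pow iterS -/(fps_pow _ _) fps_mul_addX.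
case: j => [|j]; first by rewrite IH !bin0 addr0.
by rewrite !IH binS natrD.
Qed.

Lemma P_coef y j : P y j = \sum_(m < j.+1) y ^+ m * (E m * fps_pow L m j).
Proof. by rewrite /P /fps_comp; apply: eq_bigr => m _; rewrite /expx mulrA. Qed.

Lemma stirling_powL j m : (j`!)%:R * fps_pow L m j = (m`!)%:R * (stirling1 j m)%:~R.
Proof.
rewrite stirR.
case: (ltnP j m) => hjm.
  by rewrite powL_low // nth_default ?mulr0 // sizeSP.
pose Q := \poly_(i < j.+1) ((j`!)%:R * (E i * fps_pow L i j)) - SP j.
have HQ N : (j <= N)%N -> Q.[N%:R] = 0.
  move=> hjN; rewrite hornerD hornerN horner_poly SP_eval //.
  rewrite -bin_ffact natrM -(powZ N j) -P_nat P_coef mulr_suml.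
  apply/eqP; rewrite subr_eq0; apply/eqP; apply: eq_bigr => i _.
  by ring.
have Q0 : Q = 0.
  apply/eqP; apply/negPn/negP => Qn0.
  have := @max_poly_roots _ Q [seq (j + i)%:R | i <- iota 0 (size Q)] Qn0.
  rewrite size_map size_iota ltnn => H.
  suff : false by []. apply: H.
    apply/allP => y /mapP [i _ ->]; apply/eqP; apply: HQ; exact: leq_addr.
  rewrite map_inj_uniq ?iota_uniq // => a b /eqP; rewrite eqr_nat eqn_add2l.
  by move/eqP.
have := congr1 (fun p : {poly R} => p`_m) Q0.
rewrite coefB coef_poly ltnS hjm coef0 => /eqP; rewrite subr_eq0 => /eqP <-.
rewrite /fps_exp mulrCA mulVKf //; exact: fact_neq0.
Qed.

Lemma sum_ext0' (F : nat -> R) (a N : nat) : (a <= N)%N ->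
  (forall j, (a <= j)%N -> (j < N)%N -> F j = 0) ->
  \sum_(j < N) F j = \sum_(j < a) F j.
Proof.
move=> aN H; rewrite -(subnKC aN) big_split_ord /=.
rewrite [X in _ + X]big1 ?addr0 // => j _.
by apply: H; [rewrite leq_addr | have := ltn_ord j; lia].
Qed.

Lemma stir_low j m : (j < m)%N -> (stirling1 j m)%:~R = 0 :> R.
Proof. by move=> h; rewrite stirR nth_default // sizeSP. Qed.

Theorem main_thm (n r s : nat) (k : int) (x : R) :
  Atil n r k x =
  \sum_(m < n.+1)
     (\sum_(l < (n - m).+1)
         'C(n, l)%:R * (stirling1 (n - l) m)%:~R * Atil l (r + s) k (s%:R : R))
     * bernoulli_poly s m x.
Proof.
set A' := Atil_gf (r + s) k (s%:R : R).
set b := bern_gf s x.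
have RHS : \sum_(m < n.+1)
     (\sum_(l < (n - m).+1)
         'C(n, l)%:R * (stirling1 (n - l) m)%:~R * Atil l (r + s) k (s%:R : R))
     * bernoulli_poly s m x =
   \sum_(m < n.+1) \sum_(l < n.+1)
     'C(n, l)%:R * (stirling1 (n - l) m)%:~R * ((l`!)%:R * A' l) * ((m`!)%:R * b m).
  apply: eq_bigr => m _; rewrite mulr_suml.
  rewrite (@sum_ext0' (fun l => 'C(n, l)%:R * (stirling1 (n - l) m)%:~R *
     ((l`!)%:R * A' l) * ((m`!)%:R * b m)) (n - m).+1 n.+1); last 2 first.
  - by rewrite ltnS leq_subr.
  - by move=> l h1 h2; rewrite stir_low ?mulr0 ?mul0r //; have := ltn_ord m; lia.
  by [].
rewrite RHS exchange_big /= /Atil (main_gf r s) -/A' /fps_mul mulr_sumr.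
apply: eq_bigr => l _.
have hl : (l <= n)%N by have := ltn_ord l; lia.
rewrite /fps_comp -/b mulr_sumr mulr_sumr.
rewrite -(@sum_ext0' (fun m => n`!%:R * (A' l * (b m * fps_pow L m (n - l)%N)))
   (n - l).+1 n.+1); last 2 first.
- by rewrite ltnS leq_subr.
- by move=> m h1 h2; rewrite powL_low ?mulr0 //.
apply: eq_bigr => m _.
have Hst := stirling_powL (n - l) m.
rewrite -(bin_fact hl) !natrM.
transitivity ('C(n, l)%:R * l`!%:R * A' l * b m * ((n - l)`!%:R * fps_pow L m (n - l)%N)).
  by ring.
by rewrite Hst; ring.
Qed.

End Fps.

Theorem theorem7 (R : numFieldType) (n r s : nat) (k : int) (x : R) :
  Atil n r k x =
  \sum_(m < n.+1)
     (\sum_(l < (n - m).+1)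
         'C(n, l)%:R * (stirling1 (n - l) m)%:~R * Atil l (r + s) k (s%:R : R))
     * bernoulli_poly s m x.
Proof. exact: main_thm. Qed.
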